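(* Let $(X(t),T(t))_{t\ge0}$ be the joint KMP–temperature process described in the context, with arbitrary initial condition $(X(0),T(0))\in\mathbb R_+^{\overline{\mathbb V}}\times\mathbb R_+^{\overline{\mathbb V}}$ satisfying $T_j(0)=T_j$ for all $j\in\partial\mathbb V$, and define $\zeta_i(t):=X_i(t)T_i(t)$ for $i\in\overline{\mathbb V}$. Then the marginal process $X(t)$ is a Markov process with generator $L^\zeta$ with boundary temperatures identically equal to $1$ (i.e. $T_j=1$ for all $j\in\partial\mathbb V$ in the definition of $L^\zeta$), and the process $\zeta(t)$ is a Markov process with generator $L^\zeta$ with boundary temperatures $T_{\partial\mathbb V}=(T_j)_{j\in\partial\mathbb V}$; that is, both are boundary driven KMP processes.
   Context: Graph: $(\overline{\mathbb V},\overline E)$ is a finite oriented graph; $\overline{\mathbb V}=\mathbb V\cup\partial\mathbb V$ (disjoint; internal and boundary vertices). There is at most one edge between any pair of vertices and if $ij\in\overline E$ then $ji\notin\overline E$. $E$ is the set of edges with both endpoints in $\mathbb V$, $\partial E$ the set of edges with one endpoint in $\partial\mathbb V$; there are no edges between two boundary vertices, and every boundary edge is written $ij$ with $i\in\mathbb V$, $j\in\partial\mathbb V$. $\overline E=E\cup\partial E$. Each $j\in\partial\mathbb V$ carries a fixed temperature $T_j>0$. KMP process with boundary temperatures $T_{\partial\mathbb V}$: Markov process on $\mathbb R_+^{\overline{\mathbb V}}$ with generator $L^\zeta f(\zeta)=\sum_{ij\in E}\int_0^1du\,[f(H^\zeta_{ij;u}\zeta)-f(\zeta)]+\sum_{ij\in\partial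 E}\int_0^1du\int_0^\infty db\,e^{-b}[f(H^\zeta_{ij;u,b}\zeta)-f(\zeta)]$, where $(H^\zeta_{ij;u}\zeta)_i=u(\zeta_i+\zeta_j)$, $(H^\zeta_{ij;u}\zeta)_j=(1-u)(\zeta_i+\zeta_j)$, $(H^\zeta_{ij;u,b}\zeta)_i=u(\zeta_i+\zeta_j)$, $(H^\zeta_{ij;u,b}\zeta)_j=bT_j$, and all other coordinates unchanged. Joint KMP–temperature process $(X,T)$ on $\mathbb R_+^{\overline{\mathbb V}}\times\mathbb R_+^{\overline{\mathbb V}}$: generator $L^{X,T}f(X,T)=\sum_{ij\in E}\int_0^1du\,[f(H_{i,j;u}(X,T))-f(X,T)]+\sum_{ij\in\partial E}\int_0^\infty db\,e^{-b}\int_0^1du\,[f(H_{i,j;b,u}(X,T))-f(X,T)]$, where, writing $\bar T:=\frac{X_i}{X_i+X_j}T_i+\frac{X_j}{X_i+X_j}T_j$: $H_{i,j;u}$ sets $(X_i,T_i)\to(u(X_i+X_j),\bar T)$, $(X_j,T_j)\to((1-u)(X_i+X_j),\bar T)$ and leaves other coordinates unchanged; $H_{i,j;b,u}$ (for $j\in\partial\mathbb V$) sets $(X_i,T_i)\to(u(X_i+X_j),\bar T)$, $(X_j,T_j)\to(b,T_j)$ and leaves other coordinates unchanged. In particular $T_j(t)=T_j$ for all $t$ and all $j\in\partial\mathbb V$. *)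

(* Defs.v *)
From HB Require Import structures.
From mathcomp Require Import all_boot all_order all_algebra.
From mathcomp Require Import all_classical all_reals all_analysis.
Set Implicit Arguments. Unset Strict Implicit. Unset Printing Implicit Defensive.
Import Order.TTheory GRing.Theory Num.Theory.
Import numFieldNormedType.Exports.
Local Open Scope classical_set_scope.
Local Open Scope ring_scope.

Section Defs.
Variable R : realType.

(* ---------- Graph ----------
   V : finite type of all vertices (= \overline{V}); bnd : boundary vertices;
   E : oriented edge relation on \overline{V}.  Standing assumptions:
   ij edge -> ji not an edge (this also excludes loops), and every edge ij has
   an internal tail i (so no boundary-boundary edges, and boundary edges are
   oriented internal -> boundary). *)
Definition kmp_graph (V : finType) (bnd : pred V) (E : rel V) : Prop :=
  (forall i j, E i j -> ~~ E j i) /\ (forall i j, E i j -> ~~ bnd i).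

Definition int01 (h : R -> R) : R :=
  \int[@lebesgue_measure R]_(u in [set u : R | 0 <= u <= 1]) h u.
Definition intpos (h : R -> R) : R :=
  \int[@lebesgue_measure R]_(b in [set b : R | 0 <= b]) h b.

Definition upd_bulk (V : finType) (z : V -> R) (i j : V) (u : R) : V -> R :=
  fun k => if k == i then u * (z i + z j)
           else if k == j then (1 - u) * (z i + z j) else z k.

Definition upd_bnd (V : finType) (Tb : V -> R) (z : V -> R) (i j : V) (u b : R)
  : V -> R :=
  fun k => if k == i then u * (z i + z j)
           else if k == j then b * Tb j else z k.

(* L^zeta with boundary temperatures Tb (only the values Tb j, j boundary, matter) *)
Definition LKMP (V : finType) (bnd : pred V) (E : rel V) (Tb : V -> R)
  (f : (V -> R) -> R) (z : V -> R) : R :=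
  \sum_(p : V * V | E p.1 p.2 && ~~ bnd p.2)
      int01 (fun u => f (upd_bulk z p.1 p.2 u) - f z)
  + \sum_(p : V * V | E p.1 p.2 && bnd p.2)
      int01 (fun u => intpos (fun b =>
        expR (- b) * (f (upd_bnd Tb z p.1 p.2 u b) - f z))).

Definition Tbar (V : finType) (x t : V -> R) (i j : V) : R :=
  x i / (x i + x j) * t i + x j / (x i + x j) * t j.

Definition updXT_bulk (V : finType) (s : (V -> R) * (V -> R)) (i j : V) (u : R)
  : (V -> R) * (V -> R) :=
  let x := s.1 in let t := s.2 in
  (fun k => if k == i then u * (x i + x j)
            else if k == j then (1 - u) * (x i + x j) else x k,
   fun k => if (k == i) || (k == j) then Tbar x t i j else t k).

Definition updXT_bnd (V : finType) (s : (V -> R) * (V -> R)) (i j : V) (b u : R)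
  : (V -> R) * (V -> R) :=
  let x := s.1 in let t := s.2 in
  (fun k => if k == i then u * (x i + x j)
            else if k == j then b else x k,
   fun k => if k == i then Tbar x t i j else t k).

Definition LXT (V : finType) (bnd : pred V) (E : rel V)
  (f : (V -> R) * (V -> R) -> R) (s : (V -> R) * (V -> R)) : R :=
  \sum_(p : V * V | E p.1 p.2 && ~~ bnd p.2)
      int01 (fun u => f (updXT_bulk s p.1 p.2 u) - f s)
  + \sum_(p : V * V | E p.1 p.2 && bnd p.2)
      intpos (fun b => expR (- b) *
        int01 (fun u => f (updXT_bnd s p.1 p.2 b u) - f s)).

Definition coord_sigma (I S : Type) (c : I -> S -> R) : set (set S) :=
  <<s \bigcup_(i in [set: I]) preimage_set_system [set: S] (c i) measurable >>.

Definition state_sigma (V : finType) : set (set (V -> R)) :=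
  coord_sigma (fun (k : V) (z : V -> R) => z k).

Definition joint_sigma (V : finType) : set (set ((V -> R) * (V -> R))) :=
  coord_sigma (fun (k : V + V) (s : (V -> R) * (V -> R)) =>
                 match k with inl k => s.1 k | inr k => s.2 k end).

Definition nonneg_state (V : finType) : set (V -> R) :=
  [set z | forall k, 0 <= z k].
Definition nonneg_joint (V : finType) : set ((V -> R) * (V -> R)) :=
  [set s | (forall k, 0 <= s.1 k) /\ (forall k, 0 <= s.2 k)].

Definition bmeas (S : Type) (MS : set (set S)) (f : S -> R) : Prop :=
  (exists M : R, forall x, `|f x| <= M) /\
  (forall B : set R, measurable B -> MS (f @^-1` B)).

(* ---------- Markov process with generator L ----------
   Y is a Markov process with state space Sspace (sigma-algebra MS) and
   generator L on the probability space (Omega, P), in the sense of the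
   (Stroock-Varadhan / Ethier-Kurtz) martingale problem w.r.t. the natural
   filtration of Y: each Y t is a random variable with values in Sspace, and
   for all bounded measurable f, all 0 <= s_1,...,s_n <= s <= t and all bounded
   measurable g_1,...,g_n,
     E[(f(Y t) - f(Y s)) prod_k g_k(Y s_k)]
        = int_s^t E[(L f)(Y r) prod_k g_k(Y s_k)] dr,
   i.e. f(Y t) - f(Y 0) - int_0^t (L f)(Y r) dr is a martingale. *)
Definition markov_gen d (Omega : measurableType d) (P : probability Omega R)
  (S : Type) (MS : set (set S)) (Sspace : set S)
  (L : (S -> R) -> S -> R) (Y : R -> Omega -> S) : Prop :=
  (forall t, 0 <= t -> forall A, MS A -> measurable (Y t @^-1` A)) /\
  (forall t w, 0 <= t -> Sspace (Y t w)) /\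
  (forall f, bmeas MS f ->
   forall (n : nat) (sk : 'I_n -> R) (g : 'I_n -> S -> R),
   (forall k, bmeas MS (g k)) ->
   forall s t, (forall k, 0 <= sk k <= s) -> 0 <= s -> s <= t ->
   \int[P]_w ((f (Y t w) - f (Y s w)) * \prod_(k < n) g k (Y (sk k) w))
   = \int[@lebesgue_measure R]_(r in [set r : R | s <= r <= t])
       (\int[P]_w (L f (Y r w) * \prod_(k < n) g k (Y (sk k) w)))).

End Defs.

(* Main.v *)
Require Import Defs.
From HB Require Import structures.
From mathcomp Require Import all_boot all_order all_algebra.
From mathcomp Require Import all_classical all_reals all_analysis.
From mathcomp Require Import measurable_realfun.
Import Order.TTheory GRing.Theory Num.Theory.
Local Open Scope classical_set_scope.
Local Open Scope ring_scope.

Definition fnR (R : realType) (V : finType) := V -> R.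
HB.instance Definition _ (R : realType) (V : finType) := gen_eqMixin (fnR R V).
HB.instance Definition _ (R : realType) (V : finType) := gen_choiceMixin (fnR R V).
HB.instance Definition _ (R : realType) (V : finType) := isPointed.Build (fnR R V) (fun _ => 0).

Section Meas.
Variable R : realType.
Variable V : finType.
Definition sgen : set (set (fnR R V)) := \bigcup_(i in [set: V]) preimage_set_system [set: fnR R V] (fun z : fnR R V => z i) measurable.
Definition ST := g_sigma_algebraType sgen.
Definition jgen : set (set (fnR R V * fnR R V)) := \bigcup_(i in [set: V + V]) preimage_set_system [set: fnR R V * fnR R V] (fun (s : fnR R V * fnR R V) => match i with inl k => s.1 k | inr k => s.2 k end) measurable.
Definition JT := g_sigma_algebraType jgen.

Lemma mJ1 k : measurable_fun [set: JT] (fun s : JT => s.1 k).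
Proof. by move=> _ B mB; apply: sub_sigma_algebra; exists (inl k) => //; exists B. Qed.
Lemma mJ2 k : measurable_fun [set: JT] (fun s : JT => s.2 k).
Proof. by move=> _ B mB; apply: sub_sigma_algebra; exists (inr k) => //; exists B. Qed.

Lemma mST_of d (aT : measurableType d) (phi : aT -> ST) :
  (forall k, measurable_fun [set: aT] (fun a => phi a k)) -> measurable_fun [set: aT] phi.
Proof.
move=> h; refine (@measurability _ _ aT ST setT phi sgen erefl _).
move=> _ [_ [k _ [B mB <-]] <-].
rewrite !setTI; have := h k measurableT B mB; rewrite setTI; exact.
Qed.

Lemma bmeas_ST (f : fnR R V -> R) : bmeas (@state_sigma R V) f -> measurable_fun [set: ST] f.
Proof. by move=> [_ h] _ B mB; rewrite setTI; exact: h. Qed.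

Lemma meas_bmeas_J (F : fnR R V * fnR R V -> R) :
  measurable_fun [set: JT] F -> (exists M, forall x, `|F x| <= M) -> bmeas (@joint_sigma R V) F.
Proof.
move=> mF bF; split => // B mB.
by have := mF measurableT B mB; rewrite setTI.
Qed.

Lemma mfst : measurable_fun [set: JT] (fun s : JT => (s.1 : ST)).
Proof. by apply: mST_of => k; exact: mJ1. Qed.

Lemma mzeta : measurable_fun [set: JT] (fun s : JT => ((fun i => s.1 i * s.2 i) : ST)).
Proof. by apply: mST_of => k; apply: measurable_funM; [exact: mJ1|exact: mJ2]. Qed.

End Meas.

Section Swap.
Variable R : realType.
Notation mu := (@lebesgue_measure R).
Notation RL := (measurableTypeR R).
Definition I01 : set RL := [set u : RL | 0 <= u <= 1].
Definition Ipos : set RL := [set b : RL | 0 <= b].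

Lemma I01E : I01 = `[0, 1]%classic.
Proof. by apply/seteqP; split => x; rewrite /I01 /= in_itv. Qed.
Lemma IposE : Ipos = `[0, +oo[%classic.
Proof. by apply/seteqP; split => x; rewrite /Ipos /= in_itv /= andbT. Qed.
Lemma mI01 : measurable I01.
Proof. by rewrite I01E; exact: measurable_itv. Qed.
Lemma mIpos : measurable Ipos.
Proof. by rewrite IposE; exact: measurable_itv. Qed.
Lemma muI01 : mu I01 = 1%E.
Proof. by rewrite I01E lebesgue_measure_itv /= lte_fin ltr01 -EFinD subr0. Qed.

Lemma int_exp : mu.-integrable Ipos (fun b : RL => (expR (- b))%:E).
Proof.
have h := integrable_exponential_pdf (@ltr01 R).
have := @eq_integrable _ _ _ mu _ mIpos (EFin \o exponential_pdf 1).
move=> H. refine (H _ _ _).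
  move=> b; rewrite inE /Ipos /= => b0.
  by rewrite exponential_pdfE // mul1r mulN1r.
apply: integrableS h => //; exact: mIpos.
Qed.


Lemma sec_meas1 (k : R -> R -> R) :
  measurable_fun [set: (measurableTypeR R * measurableTypeR R)%type] (fun p => k p.1 p.2) ->
  forall u, measurable_fun [set: measurableTypeR R] (fun b => k u b).
Proof.
move=> mk u; have -> : (fun b => k u b) = (fun p => k p.1 p.2) \o (fun b : measurableTypeR R => (u, b)) by [].
by apply: measurableT_comp => //; apply: measurable_fun_pair.
Qed.

Lemma sec_meas2 (k : R -> R -> R) :
  measurable_fun [set: (measurableTypeR R * measurableTypeR R)%type] (fun p => k p.1 p.2) ->
  forall b, measurable_fun [set: measurableTypeR R] (fun u => k u b).
Proof.
move=> mk b; have -> : (fun u => k u b) = (fun p => k p.1 p.2) \o (fun u : measurableTypeR R => (u, b)) by [].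
by apply: measurableT_comp => //; apply: measurable_fun_pair.
Qed.


Lemma int_I01 (h : R -> R) (M : R) :
  measurable_fun [set: RL] h -> (forall u, `|h u| <= M) ->
  mu.-integrable I01 (fun u : RL => (h u)%:E).
Proof.
move=> mh hM.
have icst : mu.-integrable I01 (fun u : RL => M%:E).
  apply/integrableP; split; first exact: measurable_cst.
  change (\int[mu]_(x in I01) (cst `|M%:E|%E) x < +oo)%E.
  rewrite integral_cst; last exact: mI01.
  by rewrite (_ : _ I01 = 1%E) ?mule1 ?abse_EFin ?ltey //; exact: muI01.
refine (le_integrable mI01 _ _ icst).
  by apply/measurable_EFinP; apply: measurable_funTS.
move=> u _ /=.
by rewrite lee_fin (le_trans (hM u)) // ler_norm.
Qed.

Lemma swap (k : R -> R -> R) (M : R) :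
  measurable_fun [set: (measurableTypeR R * measurableTypeR R)%type] (fun p => k p.1 p.2) ->
  (forall u b, `|k u b| <= M * expR (- b)) ->
  int01 (fun u => intpos (k u)) = intpos (fun b => int01 (fun u => k u b)).
Proof.
move=> mk kM.
have M0 : 0 <= M.
  by have := kM 0 0; rewrite oppr0 expR0 mulr1; apply: le_trans.
have mk1 := @sec_meas1 k mk; have mk2 := @sec_meas2 k mk.
have ik1 u : mu.-integrable Ipos (fun b : RL => (k u b)%:E).
  refine (le_integrable mIpos _ _ (integrableZl mIpos M int_exp)).
    by apply/measurable_EFinP; apply: measurable_funTS.
  move=> b _ /=.
  by rewrite lee_fin (ger0_norm (mulr_ge0 M0 (expR_ge0 _))).
have ik2 b : mu.-integrable I01 (fun u : RL => (k u b)%:E).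
  have icst : mu.-integrable I01 (fun u : RL => (M * expR (- b))%:E).
    apply/integrableP; split; first exact: measurable_cst.
    change (\int[mu]_(x in I01) (cst `|(M * expR (- b))%:E|%E) x < +oo)%E.
    rewrite integral_cst; last exact: mI01.
    by rewrite (_ : _ I01 = 1%E) ?mule1 ?abse_EFin ?ltey //; exact: muI01.
  refine (le_integrable mI01 _ _ icst).
    by apply/measurable_EFinP; apply: measurable_funTS.
  move=> u _ /=.
  by rewrite lee_fin (ger0_norm (mulr_ge0 M0 (expR_ge0 _))).
pose H := (fun p : RL * RL => (k p.1 p.2)%:E) \_ (I01 `*` Ipos).
have mX : measurable (I01 `*` Ipos) := measurableX mI01 mIpos.
have mH : measurable_fun [set: RL * RL] H.
  apply/(measurable_restrict _ mX measurableT).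
  by apply: measurable_funTS; apply/measurable_EFinP.
have HE1 u : (\int[mu]_b H (u, b) = if u \in I01 then \int[mu]_(b in Ipos) (k u b)%:E else 0)%E.
  case: ifPn => uI.
  - rewrite [RHS]integral_mkcond; apply: eq_integral => b _.
    by rewrite /H !patchE in_setX uI /=.
  - rewrite (eq_integral (cst 0%E)) ?integral0 // => b _.
    by rewrite /H patchE in_setX (negbTE uI).
have HE2 b : (\int[mu]_u H (u, b) = if b \in Ipos then \int[mu]_(u in I01) (k u b)%:E else 0)%E.
  case: ifPn => bI.
  - rewrite [RHS]integral_mkcond; apply: eq_integral => u _.
    by rewrite /H !patchE in_setX bI /= andbT.
  - rewrite (eq_integral (cst 0%E)) ?integral0 // => u _.
    by rewrite /H patchE in_setX (negbTE bI) andbF.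
have iH : (mu \x mu)%E.-integrable [set: RL * RL] H.
  apply/(integrable12ltyP mu mu mH).
  pose C := (\int[mu]_(b in Ipos) (M%:E * (expR (- b))%:E))%E.
  have Cfin : C \is a fin_num := integrable_fin_num mIpos (integrableZl mIpos M int_exp).
  apply: (@le_lt_trans _ _ (\int[mu]_(u in I01) (cst C u))%E); last first.
    rewrite integral_cst; last exact: mI01.
    rewrite (_ : _ I01 = 1%E); last exact: muI01.
    by rewrite mule1 ltey_eq Cfin.
  rewrite [X in (_ <= X)%E]integral_mkcond.
  apply: ge0_le_integral => //.
  - by move=> u _; apply: integral_ge0 => b _; exact: abse_ge0.
  - exact: (measurable_fun_fubini_tonelli_F (m2 := mu) (abse \o H) (measurableT_comp (@abse_measurable _ setT) mH) (fun _ => abse_ge0 _)).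
  - apply/(measurable_restrict _ mI01 measurableT).
    exact: measurable_cst.
  - move=> u _; rewrite patchE; case: ifPn => uI; last first.
      rewrite (eq_integral (cst 0%E)) ?integral0 // => b _.
      by rewrite /H patchE in_setX (negbTE uI) /= normr0.
    rewrite (_ : (\int[mu]_b `|H (u, b)|)%E = (\int[mu]_(b in Ipos) `|(k u b)%:E|)%E); last first.
      rewrite [RHS]integral_mkcond; apply: eq_integral => b _.
      rewrite /H !patchE in_setX uI /=; case: ifPn => //= _; exact: abse0.
    apply: ge0_le_integral => //.
    + exact: mIpos.
    + apply: measurableT_comp => //; apply: measurable_funTS; apply/measurable_EFinP; exact: mk1.
    + apply: measurable_funTS; apply/measurable_EFinP.
      apply: measurable_funM => //; exact: measurableT_comp.
    + by move=> b _; rewrite abse_EFin -EFinM lee_fin kM.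
rewrite /int01 /intpos /Rintegral.
transitivity (fine (\int[mu]_u \int[mu]_b H (u, b))%E).
  congr fine; rewrite integral_mkcond; apply: eq_integral => u _.
  rewrite HE1 patchE; case: ifPn => // uI.
  by rewrite fineK //; exact (integrable_fin_num mIpos (ik1 u)).
rewrite (Fubini iH).
congr fine; rewrite [RHS]integral_mkcond; apply: eq_integral => b _.
rewrite HE2 patchE; case: ifPn => // bI.
by rewrite fineK //; exact (integrable_fin_num mI01 (ik2 b)).
Qed.

End Swap.
Section Null.
Context d (T : measurableType d) (R : realType) (mu : {measure set T -> \bar R}).
Import HBNNSimple.
Local Open Scope ereal_scope.

Lemma nn_sup_le (F G : T -> \bar R) (N : set T) :
  measurable N -> mu N = 0 -> (forall x, 0 <= G x) ->
  (forall x, ~ N x -> F x = G x) ->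
  ereal_sup [set sintegral mu h | h in [set h : {nnsfun T >-> R} | forall x, (h x)%:E <= F x]] <=
  ereal_sup [set sintegral mu h | h in [set h : {nnsfun T >-> R} | forall x, (h x)%:E <= G x]].
Proof.
move=> mN N0 G0 FG.
apply: ge_ereal_sup => _ [h hF <-].
have mCN : measurable (~` N) by exact: measurableC.
pose h' := proj_nnsfun h mCN.
have -> : sintegral mu h = sintegral mu h'.
  rewrite -!integralT_nnsfun.
  rewrite (@ge0_negligible_integral _ _ _ mu setT N) //; last 2 first.
    by apply/measurable_EFinP; exact: measurable_funTS.
    by move=> x _; rewrite lee_fin.
  rewrite [RHS](@ge0_negligible_integral _ _ _ mu setT N) //; last 2 first.
    by apply/measurable_EFinP; exact: measurable_funTS.
    by move=> x _; rewrite lee_fin.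
  apply: eq_integral => x; rewrite inE => -[_ nNx].
  by rewrite /h' /proj_nnsfun /= mindicE mem_set // mulr1.
apply: ereal_sup_ubound; exists h' => // x.
rewrite /h' /proj_nnsfun /= mindicE.
have [Nx|nNx] := pselect (N x).
  by rewrite memNset ?mulr0 //.
by rewrite mem_set // mulr1 -FG.
Qed.


Lemma eint_null (N : set T) (f g : T -> \bar R) :
  measurable N -> mu N = 0 -> (forall x, ~ N x -> f x = g x) ->
  \int[mu]_x f x = \int[mu]_x g x.
Proof.
move=> mN N0 fg.
rewrite /integral.
have E1 x : ~ N x -> ((f \_ setT)^\+) x = ((g \_ setT)^\+) x.
  by move=> nNx; rewrite !funeposE !patchE in_setT fg.
have E2 x : ~ N x -> ((f \_ setT)^\-) x = ((g \_ setT)^\-) x.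
  by move=> nNx; rewrite !funenegE !patchE in_setT fg.
congr (_ - _); apply/eqP; rewrite eq_le; apply/andP; split;
  refine (@nn_sup_le _ _ N mN N0 _ _) => // x; by [exact: funepos_ge0|exact: funeneg_ge0|move=> nx; rewrite E1|move=> nx; rewrite E2|move=> nx; rewrite -E1|move=> nx; rewrite -E2].
Qed.

Lemma Rint_null (N : set T) (f g : T -> R) :
  measurable N -> mu N = 0 -> (forall x, ~ N x -> f x = g x) ->
  (\int[mu]_x f x = \int[mu]_x g x)%R.
Proof.
move=> mN N0 fg; rewrite /Rintegral; congr fine.
by apply: (@eint_null N _ _ mN N0) => x /fg ->.
Qed.

End Null.


Section Pbnd.
Variable R : realType.
Variable V : finType.
Notation RL := (measurableTypeR R).

Lemma mupd (T z : V -> R) (i j : V) :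
  measurable_fun [set: (RL * RL)%type] (fun p : RL * RL => (upd_bnd T z i j p.1 p.2 : ST R V)).
Proof.
apply: mST_of => k; rewrite /upd_bnd.
case: (k == i); first by apply: measurable_funM => //; exact: measurable_fst.
case: (k == j); first by apply: measurable_funM => //; exact: measurable_snd.
exact: measurable_cst.
Qed.

Lemma Pbnd (f : fnR R V -> R) (Mf : R) (T z : V -> R) (i j : V) :
  measurable_fun [set: ST R V] f -> (forall y, `|f y| <= Mf) ->
  intpos (fun b => expR (- b) * int01 (fun u => f (upd_bnd T z i j u b) - f z))
  = int01 (fun u => intpos (fun b => expR (- b) * (f (upd_bnd T z i j u b) - f z))).
Proof.
move=> mf bf.
have mk' : measurable_fun [set: (RL * RL)%type]
   (fun p : RL * RL => (fun u b => f (upd_bnd T z i j u b) - f z) p.1 p.2).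
  apply: measurable_funB => //.
  exact: (measurableT_comp mf (mupd T z i j)).
have mk : measurable_fun [set: (RL * RL)%type]
   (fun p : RL * RL => (fun u b => expR (- b) * (f (upd_bnd T z i j u b) - f z)) p.1 p.2).
  apply: measurable_funM.
    apply: measurableT_comp; first exact: measurable_expR.
    apply: measurableT_comp; first exact: oppr_measurable.
    exact: measurable_snd.
  exact: mk'.
rewrite (@swap R _ (Mf + Mf) mk); last first.
  move=> u b; rewrite normrM (ger0_norm (expR_ge0 _)) mulrC ler_wpM2r ?expR_ge0 //.
  by rewrite (le_trans (ler_normB _ _)) // lerD.
rewrite /intpos; apply: eq_Rintegral => b _.
rewrite /int01 RintegralZl //; first exact: mI01.
refine (@int_I01 R _ (Mf + Mf) (@sec_meas2 R (fun u b => f (upd_bnd T z i j u b) - f z) mk' b) _).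
by move=> u; rewrite (le_trans (ler_normB _ _)) // lerD.
Qed.
End Pbnd.

Section Pointwise.
Variable R : realType.
Variable V : finType.
Variable bnd : pred V.
Variable E : rel V.

Definition zeta (s : (V -> R) * (V -> R)) : V -> R := fun i => s.1 i * s.2 i.

Lemma Tbar_mul (x t : V -> R) i j : 0 <= x i -> 0 <= x j ->
  (x i + x j) * Tbar x t i j = x i * t i + x j * t j.
Proof.
move=> xi xj; rewrite /Tbar.
have [h|h] := eqVneq (x i + x j) 0.
  have xi0 : x i = 0 by apply/eqP; rewrite eq_le xi andbT -h lerDl.
  have xj0 : x j = 0 by move: h; rewrite xi0 add0r.
  by rewrite h xi0 xj0 !mul0r addr0.
by rewrite mulrDr; congr (_ + _); rewrite mulrA mulrCA mulfV // mulr1.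
Qed.

Lemma LXT_fst (f : fnR R V -> R) (Mf : R) :
  measurable_fun [set: ST R V] f -> (forall y, `|f y| <= Mf) ->
  forall s, LXT bnd E (fun s => f s.1) s = LKMP bnd E (fun _ => 1) f s.1.
Proof.
move=> mf bf s; rewrite /LXT /LKMP; congr (_ + _).
apply: eq_bigr => p _.
rewrite -(@Pbnd R V f Mf (fun _ => 1) s.1 p.1 p.2 mf bf).
congr intpos; apply/funext => b; congr (_ * _); congr int01; apply/funext => u.
congr (f _ - _); apply/funext => k; rewrite /updXT_bnd /upd_bnd /=.
by case: (k == p.1) => //; case: (k == p.2); rewrite ?mulr1.
Qed.


Lemma LXT_zeta (f : fnR R V -> R) (Mf : R) (Tb : V -> R) :
  kmp_graph bnd E ->
  measurable_fun [set: ST R V] f -> (forall y, `|f y| <= Mf) ->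
  forall s, (forall k, 0 <= s.1 k) -> (forall j, bnd j -> s.2 j = Tb j) ->
  LXT bnd E (fun s => f (zeta s)) s = LKMP bnd E Tb f (zeta s).
Proof.
move=> [hG1 hG2] mf bf s s0 sT; rewrite /LXT /LKMP; congr (_ + _).
  apply: eq_bigr => p /andP[Ep _].
  have nij : p.1 != p.2.
    by apply/eqP => e; have := hG1 _ _ Ep; rewrite e in Ep *; rewrite Ep.
  congr int01; apply/funext => u.
  congr (f _ - _); apply/funext => k; rewrite /zeta /updXT_bulk /upd_bulk /=.
  have tm := @Tbar_mul s.1 s.2 p.1 p.2 (s0 p.1) (s0 p.2).
  case: eqP => [->|_] /=; first by rewrite -mulrA tm.
  have [e|nk2] := eqVneq k p.2; last by [].
  subst k.
  by rewrite -mulrA tm.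
apply: eq_bigr => p /andP[Ep bp].
have nij : p.1 != p.2.
  by apply/eqP => e; have := hG1 _ _ Ep; rewrite e in Ep *; rewrite Ep.
rewrite -(@Pbnd R V f Mf Tb (zeta s) p.1 p.2 mf bf).
congr intpos; apply/funext => b; congr (_ * _); congr int01; apply/funext => u.
congr (f _ - _); apply/funext => k; rewrite /zeta /updXT_bnd /upd_bnd /=.
have tm := @Tbar_mul s.1 s.2 p.1 p.2 (s0 p.1) (s0 p.2).
have [e|nk1] := eqVneq k p.1.
  subst k.
  by rewrite -mulrA tm.
have [e|nk2] := eqVneq k p.2; last by [].
subst k; by rewrite sT.
Qed.

End Pointwise.

Lemma Rint0 d (T : measurableType d) (R : realType) (mu : {measure set T -> \bar R}) (D : set T) :
  (\int[mu]_(x in D) (0 : R) = 0)%R.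
Proof.
rewrite /Rintegral (_ : (fun x => (0:R)%:E) = cst 0%E) //.
by rewrite integral0.
Qed.

Section ASbnd.
Variable R : realType.
Variable V : finType.
Variable bnd : pred V.
Variable E : rel V.
Variable Tb : V -> R.

Definition Bad : set ((V -> R) * (V -> R)) := [set s | exists j, bnd j /\ s.2 j <> Tb j].

Lemma mBad : (@joint_sigma R V) Bad.
Proof.
change (@measurable _ (JT R V) Bad).
have -> : Bad = \bigcup_(j in [set j | bnd j]) ((fun s : JT R V => s.2 j) @^-1` [set~ Tb j]).
  apply/seteqP; split => s /=.
    by move=> [j [bj hj]]; exists j.
  by move=> [j bj hj]; exists j.
apply: fin_bigcup_measurable; first exact: finite_finset.
move=> j _; have := @mJ2 R V j measurableT _ (measurableC (measurable_set1 (Tb j))).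
by rewrite setTI.
Qed.

Definition F0 : (V -> R) * (V -> R) -> R := \1_Bad.

Lemma F0_eq s s' : (forall j, bnd j -> s.2 j = s'.2 j) -> F0 s = F0 s'.
Proof.
move=> e; rewrite /F0 !indicE; congr (_%:R).
have h : Bad s <-> Bad s'.
  split => -[j [bj hj]]; exists j; split => //.
    by rewrite -e.
  by rewrite e.
have [/set_mem hs|/negP hs] := boolP (s \in Bad);
  have [/set_mem hs'|/negP hs'] := boolP (s' \in Bad) => //.
- by exfalso; apply: hs'; apply/mem_set; exact/h.
- by exfalso; apply: hs; apply/mem_set; exact/h.
Qed.

Lemma LXT_F0 : kmp_graph bnd E -> forall s, LXT bnd E F0 s = 0.
Proof.
move=> [hG1 hG2] s; rewrite /LXT.
have i0 : int01 (fun _ : R => (0:R)) = 0 by exact: Rint0.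
rewrite big1 ?add0r; last first.
  move=> p /andP[Ep bp].
  rewrite (_ : (fun u => _) = fun _ => 0) ?i0 //; apply/funext => u.
  rewrite (@F0_eq _ s) ?subrr // => j bj /=.
  have : j != p.1 by apply: contraNneq (hG2 _ _ Ep) => <-.
  have : j != p.2 by apply: contraNneq bp => <-.
  by move=> /negbTE -> /negbTE ->.
apply: big1 => p /andP[Ep bp].
rewrite (_ : (fun b => _) = fun _ => 0); first exact: Rint0.
apply/funext => b.
rewrite (_ : (fun u => _) = fun _ => 0) ?i0 ?mulr0 //; apply/funext => u.
rewrite (@F0_eq _ s) ?subrr // => j bj /=.
have : j != p.1 by apply: contraNneq (hG2 _ _ Ep) => <-.
by move/negbTE => ->.
Qed.

End ASbnd.

Theorem proposition2p2 (R : realType) (V : finType) (bnd : pred V) (E : rel V)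
  (Tb : V -> R)
  (hG : kmp_graph bnd E) (hTb : forall j, bnd j -> 0 < Tb j)
  (d : measure_display) (Omega : measurableType d) (P : probability Omega R)
  (Y : R -> Omega -> (V -> R) * (V -> R)) (x0 t0 : V -> R)
  (hx0 : forall i, 0 <= x0 i) (ht0 : forall i, 0 <= t0 i)
  (ht0b : forall j, bnd j -> t0 j = Tb j)
  (hY0 : forall w, Y 0 w = (x0, t0))
  (hY : markov_gen P (@joint_sigma R V) (@nonneg_joint R V) (LXT bnd E) Y) :
  markov_gen P (@state_sigma R V) (@nonneg_state R V)
    (LKMP bnd E (fun _ => 1)) (fun t w => (Y t w).1)
  /\
  markov_gen P (@state_sigma R V) (@nonneg_state R V)
    (LKMP bnd E Tb) (fun t w => fun i => (Y t w).1 i * (Y t w).2 i).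
Proof.
have [mY [sY mgY]] := hY.
have bcomp (phi : JT R V -> ST R V) (f : fnR R V -> R) :
    measurable_fun [set: JT R V] phi -> bmeas (@state_sigma R V) f ->
    bmeas (@joint_sigma R V) (fun x => f (phi x)).
  move=> mphi bf; have [[Mf hMf] _] := bf.
  apply: meas_bmeas_J; last by exists Mf.
  exact: (measurableT_comp (@bmeas_ST R V f bf) mphi).
split.
  split.
    move=> t t0' A hA.
    have hA' : (@joint_sigma R V) ((fun s : (V -> R) * (V -> R) => s.1) @^-1` A).
      by have := @mfst R V measurableT A hA; rewrite setTI.
    exact: mY t t0' _ hA'.
  split.
    by move=> t w t0'; exact: (sY t w t0').1.
  move=> f bf n sk g bg s t hsk s0 st.
  have bF := bcomp _ f (@mfst R V) bf.
  have bG := fun k => bcomp _ (g k) (@mfst R V) (bg k).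
  have H := mgY _ bF n sk _ bG s t hsk s0 st.
  have [[Mf hMf] _] := bf.
  have e : LXT bnd E (fun x : (V -> R) * (V -> R) => f x.1) = fun x => LKMP bnd E (fun _ => 1) f x.1.
    apply/funext => x.
    have := (@LXT_fst R V bnd E f Mf (@bmeas_ST R V f bf) hMf x).
    by [].
  rewrite H.
  apply: eq_Rintegral => r _; apply: eq_Rintegral => w _.
  by move: (@LXT_fst R V bnd E f Mf (@bmeas_ST R V f bf) hMf (Y r w)) => ->.
have asB : forall r, 0 <= r -> P (Y r @^-1` (@Bad R V bnd Tb)) = 0%E.
  move=> r r0.
  have bF0 : bmeas (@joint_sigma R V) (@F0 R V bnd Tb).
    apply: (@meas_bmeas_J R V).
      exact: (@measurable_indic _ (JT R V) R setT _ (@mBad R V bnd Tb)).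
    exists 1 => x; rewrite /F0 indicE; case: (_ \in _) => /=; by rewrite ?normr1 ?normr0.
  pose g0 := fun (_ : 'I_0) (_ : (V -> R) * (V -> R)) => (0:R).
  pose sk0 := fun (_ : 'I_0) => (0:R).
  have bG0 : forall k : 'I_0, bmeas (@joint_sigma R V) (g0 k) by case=> m hm; exfalso; move: hm; rewrite ltn0.
  have hsk0 : forall k : 'I_0, 0 <= sk0 k <= 0 by case=> m hm; exfalso; move: hm; rewrite ltn0.
  have H := mgY _ bF0 0 sk0 g0 bG0 0 r hsk0 (lexx 0) r0.
  move: H; set lhs := (X in X = _ -> _); set rhs := (X in _ = X -> _).
  have -> : lhs = (\int[P]_w (\1_(Y r @^-1` (@Bad R V bnd Tb)) w : R))%R.
    apply: eq_Rintegral => w _.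
    rewrite big_ord0 mulr1 hY0.
    have -> : @F0 R V bnd Tb (x0, t0) = 0.
      rewrite /F0 indicE memNset //= => -[j [bj hj]]; apply: hj; exact: ht0b.
    by rewrite subr0 /F0 !indicE.
  have -> : rhs = \int[lebesgue_measure]_(x in [set r' : R | 0 <= r' <= r]) (0:R).
    apply: eq_Rintegral => r' _.
    rewrite -(@Rint0 _ _ _ P setT); apply: eq_Rintegral => w _.
    by rewrite (@LXT_F0 R V bnd E Tb hG) mul0r.
  rewrite Rint0 /Rintegral integral_indic //; last first.
    exact: mY r r0 _ (@mBad R V bnd Tb).
  rewrite setIT => /eqP; rewrite fine_eq0; first by move/eqP.
  by apply: fin_num_measure; exact: mY r r0 _ (@mBad R V bnd Tb).
split.
  move=> t t0' A hA.
  have hA' : (@joint_sigma R V) ((fun s : (V -> R) * (V -> R) => fun i => s.1 i * s.2 i) @^-1` A).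
    by have := @mzeta R V measurableT A hA; rewrite setTI.
  exact: mY t t0' _ hA'.
split.
  move=> t w t0' k; have [h1 h2] := sY t w t0'; exact: mulr_ge0 (h1 k) (h2 k).
move=> f bf n sk g bg s t hsk s0 st.
have bF := bcomp _ f (@mzeta R V) bf.
have bG := fun k => bcomp _ (g k) (@mzeta R V) (bg k).
have H := mgY _ bF n sk _ bG s t hsk s0 st.
have [[Mf hMf] _] := bf.
rewrite H.
apply: eq_Rintegral => r /set_mem /= /andP[sr _].
have r0 : 0 <= r := le_trans s0 sr.
apply: (@Rint_null _ _ _ P (Y r @^-1` (@Bad R V bnd Tb))).
- exact: mY r r0 _ (@mBad R V bnd Tb).
- exact: asB r r0.
move=> w nw.
have [h1 h2] := sY r w r0.
have hb : forall j, bnd j -> (Y r w).2 j = Tb j.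
  by move=> j bj; apply: contrapT => hj; apply: nw; exists j.
by move: (@LXT_zeta R V bnd E f Mf Tb hG (@bmeas_ST R V f bf) hMf (Y r w) h1 hb) => ->.
Qed.
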